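(* Consider the ergodic Markov process described in the context, with equilibrium distribution $p$. If $p_1,\dots,p_{2^cK}:W\to\mathbb C$ are $2^cK$ linearly independent, absolutely convergent solutions of the inner equations, then there are (possibly complex-valued) constants $\alpha_1,\dots,\alpha_{2^cK}$, uniquely determined (by the equilibrium equations for the states in $V$ and the states $\mathbf n\in W$ with $n_0<K$, together with the normalization condition), such that \[ p(\mathbf n)=\sum_{j=1}^{2^cK}\alpha_j p_j(\mathbf n),\qquad \mathbf n\in W. \]
   Context: Fix integers $c\ge 1$ and $K\ge 1$. Consider an irreducible continuous-time Markov process on the state space $V\cup W$, where $V$ is a finite set and $W=\{\mathbf n=(n_0,n_1,\dots,n_c): n_0\in\{0,1,2,\dots\},\ n_i\in\{0,1\},\ i=1,\dots,c\}$. For each $i\in\{1,\dots,c\}$ and each integer $k\le K$ there are nonnegative rates $a_{k,i},b_{k,i},c_{k,i},d_{k,i}$. From a state $\mathbf n\in W$, for each $i$ and each $k\in\{-n_0,\dots,K\}$, the process jumps (changing only coordinates $0$ and $i$) from $(n_0,n_i)=(n_0,0)$ to $(n_0+k,1)$ at rate $a_{k,i}$ and to $(n_0+k,0)$ at rate $b_{k,i}$, and from $(n_0,n_i)=(n_0,1)$ to $(n_0+k,1)$ at rate $c_{k,i}$ and to $(n_0+k,0)$ at rate $d_{k,i}$; moreover from $\mathbf n$ it jumps into $V$ with total rate $\sum_{i=1}^c\sum_{k\le -n_0-1}\bigl((1-n_i)(a_{k,i}+b_{k,i})+n_i(c_{k,i}+d_{k,i})\bigr)$. There are no other transitions out of $W$.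 From states in $V$ no transitions are possible to states $\mathbf n\in W$ with $n_0\ge K$. All total outgoing rates are finite. The process is assumed ergodic and $p(\mathbf n)$ denotes its equilibrium probability of state $\mathbf n$. Let $e_i$ be the vector of length $c+1$ (indexed $0,\dots,c$) with a $1$ in position $i$ and zeros elsewhere. The inner equations are, for a function $q:W\to\mathbb C$ and all $\mathbf n\in W$ with $n_0\ge K$: \[\sum_{i=1}^c\sum_{k=-\infty}^K\bigl((1-n_i)(a_{k,i}+b_{k,i})+n_i(c_{k,i}+d_{k,i})\bigr)q(\mathbf n)=\sum_{i=1}^c\sum_{k=-\infty}^K\Bigl((1-n_i)\bigl(b_{k,i}q(\mathbf n-ke_0)+d_{k,i}q(\mathbf n-ke_0+e_i)\bigr)+n_i\bigl(a_{k,i}q(\mathbf n-ke_0-e_i)+c_{k,i}q(\mathbf n-ke_0)\bigr)\Bigr).\] A solution $q$ is called absolutely convergent if $\sum_{\mathbf n\in W}|q(\mathbf n)|<\infty$. *)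

(* Defs.v *)
From Stdlib Require Import Reals ZArith Relations.
From Coquelicot Require Import Coquelicot.
From mathcomp Require Import ssreflect ssrfun ssrbool eqtype ssrnat seq choice fintype finfun bigop.

Set Implicit Arguments.
Unset Strict Implicit.

(* Paper index i in {1..c}  <-> here i : 'I_c (i.e. paper's i = our i + 1). *)
(* States of W: n = (n_0, (n_1..n_c)), n_0 : nat, bits as a finite function. *)
Definition W (c : nat) : Type := (nat * {ffun 'I_c -> bool})%type.

(* Parameters of the process.  ra/rb/rc/rd i k are the rates
   a_{k,i}, b_{k,i}, c_{k,i}, d_{k,i} (only k <= K is relevant).
   QVV v v' : rate from v to v' (V -> V);
   QVW v n  : rate from v to n (V -> W);
   QWV n v  : rate from n to v (W -> V). *)
Record model (c K : nat) (V : finType) := Model {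
  ra : 'I_c -> Z -> R;
  rb : 'I_c -> Z -> R;
  rc : 'I_c -> Z -> R;
  rd : 'I_c -> Z -> R;
  QVV : V -> V -> R;
  QVW : V -> W c -> R;
  QWV : W c -> V -> R }.

Definition Rsum {I : finType} (F : I -> R) : R := \big[Rplus/0%R]_(i : I) F i.
Definition Csum {I : finType} (F : I -> C) : C := \big[Cplus/RtoC 0]_(i : I) F i.


Definition rate_i c K V (M : model c K V) (i : 'I_c) (k : Z) (nb mb : bool) : R :=
  match nb, mb with
  | false, true  => ra M i k
  | false, false => rb M i k
  | true,  true  => rc M i k
  | true,  false => rd M i k
  end.

Definition rtot c K V (M : model c K V) (i : 'I_c) (k : Z) (nb : bool) : R :=
  (rate_i M i k nb true + rate_i M i k nb false)%R.

(* Total rate of transitions W -> W from n to m (summing all i, k = m_0 - n_0 <= K,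
   with m differing from n at most in coordinates 0 and i). Self-loops included. *)
Definition rateWW c K V (M : model c K V) (n m : W c) : R :=
  Rsum (fun i : 'I_c =>
    if [forall j : 'I_c, (j != i) ==> (m.2 j == n.2 j)] then
      let k := (Z.of_nat m.1 - Z.of_nat n.1)%Z in
      if (k <=? Z.of_nat K)%Z then rate_i M i k (n.2 i) (m.2 i) else 0%R
    else 0%R).

Definition rate_to_V c K V (M : model c K V) (n : W c) : R :=
  Series (fun j : nat =>
    Rsum (fun i : 'I_c => rtot M i (- Z.of_nat n.1 - 1 - Z.of_nat j)%Z (n.2 i))).

Definition model_ok c K V (M : model c K V) : Prop :=
  (forall i k, (k <= Z.of_nat K)%Z ->
     0 <= ra M i k /\ 0 <= rb M i k /\ 0 <= rc M i k /\ 0 <= rd M i k)%R /\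
  (* finite total outgoing rates: the rates are summable over k <= K *)
  (forall i, ex_series (fun j : nat => ra M i (Z.of_nat K - Z.of_nat j)%Z) /\
             ex_series (fun j : nat => rb M i (Z.of_nat K - Z.of_nat j)%Z) /\
             ex_series (fun j : nat => rc M i (Z.of_nat K - Z.of_nat j)%Z) /\
             ex_series (fun j : nat => rd M i (Z.of_nat K - Z.of_nat j)%Z)) /\
  (forall v v', 0 <= QVV M v v')%R /\
  (forall v n, 0 <= QVW M v n)%R /\
  (forall n v, 0 <= QWV M n v)%R /\
  (forall v n, (K <= n.1)%nat -> QVW M v n = 0%R) /\
  (forall n, Rsum (fun v => QWV M n v) = rate_to_V M n) /\
  (forall v, ex_series (fun m0 : nat => Rsum (fun b => QVW M v (m0, b)))).

Definition rate c K V (M : model c K V) (x y : (V + W c)%type) : R :=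
  match x, y with
  | inl v, inl v' => QVV M v v'
  | inl v, inr n => QVW M v n
  | inr n, inl v => QWV M n v
  | inr n, inr m => rateWW M n m
  end.

Definition irreducible c K V (M : model c K V) : Prop :=
  forall x y : (V + W c)%type,
    clos_refl_trans _ (fun x y => x <> y /\ (0 < rate M x y)%R) x y.

(* Total outgoing rates (self-loops included; they cancel in the balance equations). *)
Definition outV c K V (M : model c K V) (v : V) : R :=
  (Rsum (fun v' => QVV M v v') + Series (fun m0 : nat => Rsum (fun b => QVW M v (m0, b))))%R.
Definition outW c K V (M : model c K V) (n : W c) : R :=
  (Series (fun m0 : nat => Rsum (fun b => rateWW M n (m0, b))) + Rsum (fun v => QWV M n v))%R.

Definition balanceV c K V (M : model c K V) (qV : V -> C) (qW : W c -> C) (y : V) : Prop :=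
  is_series (fun m0 : nat => Csum (fun b => Cmult (qW (m0, b)) (RtoC (QWV M (m0, b) y))))
    (Cminus (Cmult (qV y) (RtoC (outV M y)))
            (Csum (fun v => Cmult (qV v) (RtoC (QVV M v y))))).
Definition balanceW c K V (M : model c K V) (qV : V -> C) (qW : W c -> C) (n : W c) : Prop :=
  is_series (fun m0 : nat => Csum (fun b => Cmult (qW (m0, b)) (RtoC (rateWW M (m0, b) n))))
    (Cminus (Cmult (qW n) (RtoC (outW M n)))
            (Csum (fun v => Cmult (qV v) (RtoC (QVW M v n))))).
Definition normalized c (V : finType) (qV : V -> C) (qW : W c -> C) : Prop :=
  is_series (fun m0 : nat => Csum (fun b => qW (m0, b))) (Cminus (RtoC 1) (Csum qV)).

Definition equilibrium c K V (M : model c K V) (pV : V -> R) (pW : W c -> R) : Prop :=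
  (forall v, 0 <= pV v)%R /\ (forall n, 0 <= pW n)%R /\
  (forall y, balanceV M (fun v => RtoC (pV v)) (fun n => RtoC (pW n)) y) /\
  (forall n, balanceW M (fun v => RtoC (pV v)) (fun n => RtoC (pW n)) n) /\
  normalized (fun v => RtoC (pV v)) (fun n => RtoC (pW n)).

Definition abs_conv c (q : W c -> C) : Prop :=
  ex_series (fun n0 : nat => Rsum (fun b => Cmod (q (n0, b)))).

Definition setbit c (f : {ffun 'I_c -> bool}) (i : 'I_c) (x : bool) : {ffun 'I_c -> bool} :=
  [ffun j => if j == i then x else f j].

(* The inner equations at n (n_0 >= K); the sum over k = K - j, j : nat. *)
Definition inner_eq c K V (M : model c K V) (q : W c -> C) (n : W c) : Prop :=
  is_series
    (fun j : nat =>
       let k := (Z.of_nat K - Z.of_nat j)%Z in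
       let m0 := (n.1 - K + j)%nat in   (* = n_0 - k *)
       Csum (fun i : 'I_c =>
         if n.2 i then
           Cplus (Cmult (RtoC (ra M i k)) (q (m0, setbit n.2 i false)))
                 (Cmult (RtoC (rc M i k)) (q (m0, n.2)))
         else
           Cplus (Cmult (RtoC (rb M i k)) (q (m0, n.2)))
                 (Cmult (RtoC (rd M i k)) (q (m0, setbit n.2 i true)))))
    (Cmult (RtoC (Series (fun j : nat =>
              Rsum (fun i : 'I_c => rtot M i (Z.of_nat K - Z.of_nat j)%Z (n.2 i)))))
           (q n)).

Definition inner_solution c K V (M : model c K V) (q : W c -> C) : Prop :=
  forall n : W c, (K <= n.1)%nat -> inner_eq M q n.

Definition lin_comb c N (alpha : 'I_N -> C) (ps : 'I_N -> W c -> C) (n : W c) : C :=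
  Csum (fun j => Cmult (alpha j) (ps j n)).

Definition lin_indep c N (ps : 'I_N -> W c -> C) : Prop :=
  forall alpha : 'I_N -> C, (forall n, lin_comb alpha ps n = RtoC 0) -> forall j, alpha j = RtoC 0.

(* Main.v *)
Require Import Defs.
From Stdlib Require Import Reals ZArith Relations.
From Coquelicot Require Import Coquelicot.
From mathcomp Require Import ssreflect ssrfun ssrbool eqtype ssrnat seq choice fintype finfun bigop.
From Stdlib Require Import Lra Lia FunctionalExtensionality.
From mathcomp Require Import zify.

Set Implicit Arguments.
Unset Strict Implicit.
Open Scope R_scope.

Lemma is_series_lim (a : nat -> R) l : is_series a l <-> is_lim_seq (sum_n a) l.
Proof. reflexivity. Qed.

Lemma sumn_Sn (a : nat -> R) n : sum_n a (S n) = sum_n a n + a (S n).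
Proof. by rewrite sum_Sn. Qed.

Lemma sumn_ge0 (a : nat -> R) n : (forall k, 0 <= a k) -> 0 <= sum_n a n.
Proof. move=> H; elim: n => [|n IH]; first by rewrite sum_O.
rewrite sumn_Sn; move: (H n.+1); lra. Qed.

Lemma sumn_incr (a : nat -> R) n : (forall k, 0 <= a k) -> sum_n a n <= sum_n a (S n).
Proof. move=> H; rewrite sumn_Sn; move: (H n.+1); lra. Qed.

Lemma term_le_sumn (a : nat -> R) n : (forall k, 0 <= a k) -> a n <= sum_n a n.
Proof. move=> H; case: n => [|n]; first by rewrite sum_O; lra.
rewrite sumn_Sn; move: (sumn_ge0 n H); lra. Qed.

Lemma sumn_le_series (a : nat -> R) s n : (forall k, 0 <= a k) -> is_series a s -> sum_n a n <= s.
Proof. move=> H Hs. apply: is_lim_seq_incr_compare; first exact: Hs.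
move=> k; exact: sumn_incr. Qed.

Lemma term_le_series (a : nat -> R) s n : (forall k, 0 <= a k) -> is_series a s -> a n <= s.
Proof. move=> H Hs; apply: Rle_trans (term_le_sumn n H) (sumn_le_series n H Hs). Qed.

Lemma series_ge0 (a : nat -> R) s : (forall k, 0 <= a k) -> is_series a s -> 0 <= s.
Proof. move=> H Hs; apply: Rle_trans (H O) (term_le_series O H Hs). Qed.

Lemma series_le_bound (a : nat -> R) s B : is_series a s -> (forall n, sum_n a n <= B) -> s <= B.
Proof. move=> Hs HB.
have := is_lim_seq_le (sum_n a) (fun _ => B) s B HB Hs (is_lim_seq_const B). by []. Qed.

Lemma ex_series_bound (a : nat -> R) B : (forall k, 0 <= a k) -> (forall n, sum_n a n <= B) ->
  exists s, is_series a s /\ s <= B.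
Proof. move=> H HB.
have [l Hl] := ex_finite_lim_seq_incr (sum_n a) B (fun n => sumn_incr n H) HB.
exists l; split; first exact: Hl. exact: series_le_bound Hl HB. Qed.

Lemma Series_sumn (a : nat -> nat -> R) N : (forall k, ex_series (a k)) ->
  is_series (fun l => sum_n (fun k => a k l) N) (sum_n (fun k => Series (a k)) N).
Proof. move=> H; elim: N => [|N IH].
  rewrite sum_O. apply: is_series_ext (Series_correct _ (H O)) => l; by rewrite sum_O.
rewrite sumn_Sn.
apply: is_series_ext (is_series_plus _ _ _ _ IH (Series_correct _ (H N.+1))) => l.
by rewrite sumn_Sn. Qed.

Lemma tonelli_nat (a : nat -> nat -> R) (s : nat -> R) S :
  (forall k l, 0 <= a k l) -> (forall k, is_series (a k) (s k)) -> is_series s S ->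
  (forall l, ex_series (fun k => a k l)) /\ is_series (fun l => Series (fun k => a k l)) S.
Proof.
move=> H0 Hs HS.
have s0 : forall k, 0 <= s k by move=> k; exact: series_ge0 (H0 k) (Hs k).
have exl : forall l, ex_series (fun k => a k l).
  move=> l; apply: (ex_series_le _ s); last by exists S.
  move=> k; rewrite /norm /= /abs /= Rabs_pos_eq //. exact: term_le_series (H0 k) (Hs k).
split => //.
pose t l := Series (fun k => a k l).
have t0 : forall l, 0 <= t l.
  move=> l; apply: (series_ge0 (a:=fun k => a k l)) => //; exact: Series_correct.
have tB : forall L, sum_n t L <= S.
  move=> L.
  have E := Series_sumn (a:=fun l k => a k l) (N:=L) exl.
  have -> : sum_n t L = Series (fun k => sum_n (fun l => a k l) L).
    by rewrite (is_series_unique _ _ E).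
  have Hk : forall k, sum_n (fun l => a k l) L <= s k.
    move=> k; exact: sumn_le_series (H0 k) (Hs k).
  rewrite -(is_series_unique _ _ HS). apply: Series_le; last by exists S.
  move=> k; split; [exact: sumn_ge0 | exact: Hk].
have [T [HT TS]] := ex_series_bound t0 tB.
suff ST : S <= T by have -> : S = T by lra.
apply: (series_le_bound (a:=s) (s:=S) (B:=T) HS) => Kk.
have E := Series_sumn (a:=a) (N:=Kk) (fun k => ex_intro _ _ (Hs k)).
have -> : sum_n s Kk = sum_n (fun k => Series (a k)) Kk.
  apply: sum_n_ext => k; by rewrite (is_series_unique _ _ (Hs k)).
rewrite -(is_series_unique _ _ E) -(is_series_unique _ _ HT).
apply: Series_le; last by exists T.
move=> l; split; first by apply: sumn_ge0 => k.
apply: (sumn_le_series (a := fun k => a k l)) => //. exact: Series_correct.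
Qed.

Lemma is_series_zero (a : nat -> R) : (forall n, a n = 0) -> is_series a 0.
Proof. move=> H; apply/is_series_lim.
apply: (is_lim_seq_ext (fun _ => 0)); last exact: is_lim_seq_const.
move=> n; elim: n => [|n IH]; first by rewrite sum_O H.
by rewrite sumn_Sn -IH H Rplus_0_r. Qed.

From HB Require Import structures.
Lemma Rplus_assoc' : associative Rplus. Proof. move=> x y z; ring. Qed.
Lemma Rmult_assoc' : associative Rmult. Proof. move=> x y z; ring. Qed.
HB.instance Definition _ := Monoid.isComLaw.Build R 0 Rplus Rplus_assoc' Rplus_comm Rplus_0_l.
HB.instance Definition _ := Monoid.isComLaw.Build R 1 Rmult Rmult_assoc' Rmult_comm Rmult_1_l.
HB.instance Definition _ := Monoid.isMulLaw.Build R 0 Rmult Rmult_0_l Rmult_0_r.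
HB.instance Definition _ := Monoid.isAddLaw.Build R Rmult Rplus Rmult_plus_distr_r Rmult_plus_distr_l.
Lemma Cplus_assoc' : associative Cplus. Proof. move=> x y z; by rewrite Cplus_assoc. Qed.
HB.instance Definition _ := Monoid.isComLaw.Build C (RtoC 0) Cplus Cplus_assoc' Cplus_comm Cplus_0_l.

Section FinSums.
Variable I : finType.

Lemma Rsum_series_seq (r : seq I) (f : I -> nat -> R) (s : I -> R) :
  (forall i, is_series (f i) (s i)) ->
  is_series (fun n => \big[Rplus/0]_(i <- r) f i n) (\big[Rplus/0]_(i <- r) s i).
Proof. move=> H; elim: r => [|i r IH].
  rewrite big_nil; apply: is_series_zero => n; by rewrite big_nil.
rewrite big_cons. apply: is_series_ext (is_series_plus _ _ _ _ (H i) IH) => n.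
by rewrite big_cons. Qed.

Lemma Rsum_series (f : I -> nat -> R) (s : I -> R) :
  (forall i, is_series (f i) (s i)) -> is_series (fun n => Rsum (fun i => f i n)) (Rsum s).
Proof. exact: Rsum_series_seq. Qed.

Lemma Rsum_ge0 (f : I -> R) : (forall i, 0 <= f i) -> 0 <= Rsum f.
Proof. move=> H; rewrite /Rsum; elim/big_rec: _ => [|i x _ Hx]; first lra.
move: (H i); lra. Qed.

Lemma Rsum_term (f : I -> R) i : (forall i, 0 <= f i) -> f i <= Rsum f.
Proof. move=> H; rewrite /Rsum (bigD1 i) //=.
have : 0 <= \big[Rplus/0]_(j | j != i) f j.
  elim/big_rec: _ => [|j x _ Hx]; first lra. move: (H j); lra.
lra. Qed.

Lemma Rsum_plus (f g : I -> R) : Rsum (fun i => f i + g i) = Rsum f + Rsum g.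
Proof. by rewrite /Rsum big_split. Qed.

Lemma Rsum_scal (a : R) (f : I -> R) : Rsum (fun i => a * f i) = a * Rsum f.
Proof. by rewrite /Rsum big_distrr. Qed.

Lemma Rsum_opp (f : I -> R) : Rsum (fun i => - f i) = - Rsum f.
Proof. rewrite /Rsum; elim/big_rec2: _ => [|i x y _ ->]; lra. Qed.

Lemma Rsum_ext (f g : I -> R) : (forall i, f i = g i) -> Rsum f = Rsum g.
Proof. move=> H; rewrite /Rsum; apply: eq_bigr => i _; exact: H. Qed.

Lemma Rsum_le (f g : I -> R) : (forall i, f i <= g i) -> Rsum f <= Rsum g.
Proof. move=> H; rewrite /Rsum; elim/big_rec2: _ => [|i x y _ Hx]; first lra.
move: (H i); lra. Qed.

Lemma Rsum_abs (f : I -> R) : Rabs (Rsum f) <= Rsum (fun i => Rabs (f i)).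
Proof. rewrite /Rsum; elim/big_rec2: _ => [|i x y _ Hx]; first by rewrite Rabs_R0; lra.
apply: Rle_trans (Rabs_triang _ _) _; lra. Qed.

Lemma Rsum0 : Rsum (fun _ : I => 0) = 0.
Proof. rewrite /Rsum; elim/big_rec: _ => [|i x _ ->]; lra. Qed.

End FinSums.

Section XSums.
Variables (V : finType) (c : nat).
Local Notation X := (V + W c)%type.

Definition lev (f : X -> R) (k : nat) : R :=
  match k with O => Rsum (fun v => f (inl v)) | S m => Rsum (fun b => f (inr (m, b))) end.
Definition is_Xsum (f : X -> R) (s : R) : Prop :=
  is_series (fun m => Rsum (fun b => f (inr (m, b)))) (s - Rsum (fun v => f (inl v))).

Lemma Xsum_lev f s : is_Xsum f s <-> is_series (lev f) s.
Proof. split => H.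
  apply: is_series_decr_1.
  have -> : plus s (opp (lev f 0)) = s - Rsum (fun v => f (inl v)) by [].
  exact: H.
apply: (is_series_incr_1 (lev f)). rewrite /plus /=. by have -> : s - Rsum (fun v => f (inl v)) + Rsum (fun v => f (inl v)) = s by ring.
Qed.

Lemma lev_ext f g k : (forall x, f x = g x) -> lev f k = lev g k.
Proof. move=> H; case: k => [|k] /=; apply: Rsum_ext => i; exact: H. Qed.

Lemma lev_series (F : X -> nat -> R) (G : X -> R) l :
  (forall x, is_series (F x) (G x)) -> is_series (fun k => lev (fun x => F x k) l) (lev G l).
Proof. move=> H; case: l => [|l] /=; apply: Rsum_series => i; exact: H. Qed.

Lemma lev_swap (F : X -> X -> R) k l :
  lev (fun x => lev (fun y => F x y) k) l = lev (fun y => lev (fun x => F x y) l) k.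
Proof. case: k => [|k]; case: l => [|l] /=; rewrite /Rsum; exact: exchange_big. Qed.

Lemma lev_ge0 f k : (forall x, 0 <= f x) -> 0 <= lev f k.
Proof. move=> H; case: k => [|k] /=; apply: Rsum_ge0 => i; exact: H. Qed.

Definition levi (x : X) : nat := match x with inl _ => O | inr n => S n.1 end.

Lemma lev_term f x : (forall x, 0 <= f x) -> f x <= lev f (levi x).
Proof. move=> H; case: x => [v|[m b]] /=; exact: (Rsum_term (f:=fun i => f _) _ (fun i => H _)). Qed.

Lemma Xsum_ext f g s : (forall x, f x = g x) -> is_Xsum f s -> is_Xsum g s.
Proof. move=> H /Xsum_lev Hs; apply/Xsum_lev; apply: is_series_ext Hs => k; exact: lev_ext. Qed.

Lemma Xsum_eq f g s t : is_Xsum f s -> s = t -> (forall x, f x = g x) -> is_Xsum g t.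
Proof. move=> H <- E; exact: Xsum_ext H. Qed.

Lemma Xsum_unique f s t : is_Xsum f s -> is_Xsum f t -> s = t.
Proof. move=> /Xsum_lev H1 /Xsum_lev H2.
by rewrite -(is_series_unique _ _ H1) -(is_series_unique _ _ H2). Qed.

Lemma Xsum_plus f g s t : is_Xsum f s -> is_Xsum g t -> is_Xsum (fun x => f x + g x) (s + t).
Proof. move=> /Xsum_lev H1 /Xsum_lev H2; apply/Xsum_lev.
apply: is_series_ext (is_series_plus _ _ _ _ H1 H2) => k.
case: k => [|k] /=; by rewrite Rsum_plus. Qed.

Lemma Xsum_scal a f s : is_Xsum f s -> is_Xsum (fun x => a * f x) (a * s).
Proof. move=> /Xsum_lev H1; apply/Xsum_lev.
apply: is_series_ext (is_series_scal a _ _ H1) => k.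
case: k => [|k] /=; by rewrite Rsum_scal. Qed.

Lemma Xsum_term f s x : (forall x, 0 <= f x) -> is_Xsum f s -> f x <= s.
Proof. move=> H /Xsum_lev Hs. apply: Rle_trans (lev_term x H) _.
apply: term_le_series Hs => k; exact: lev_ge0. Qed.

Lemma Xsum_ge0 f s : (forall x, 0 <= f x) -> is_Xsum f s -> 0 <= s.
Proof. move=> H /Xsum_lev Hs. apply: series_ge0 Hs => k; exact: lev_ge0. Qed.

Lemma Xsum_abs f t : is_Xsum (fun x => Rabs (f x)) t -> exists s, is_Xsum f s /\ Rabs s <= t.
Proof. move=> /Xsum_lev Ht.
have Hle : forall k, Rabs (lev f k) <= lev (fun x => Rabs (f x)) k.
  by case=> [|k] /=; apply: Rsum_abs.
have ex1 : ex_series (fun k => Rabs (lev f k)).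
  apply: (ex_series_le _ (lev (fun x => Rabs (f x)))); last by exists t.
  move=> k; rewrite /norm /= /abs /= Rabs_Rabsolu; exact: Hle.
have ex2 : ex_series (lev f) by apply: ex_series_Rabs.
exists (Series (lev f)); split; first by apply/Xsum_lev; exact: Series_correct.
apply: Rle_trans (Series_Rabs _ ex1) _.
rewrite -(is_series_unique _ _ Ht). apply: Series_le; last by exists t.
move=> k; split; [exact: Rabs_pos | exact: Hle]. Qed.

Lemma Xsum_le f g t : (forall x, 0 <= f x <= g x) -> is_Xsum g t -> exists s, is_Xsum f s.
Proof. move=> H /Xsum_lev Ht.
have ex1 : ex_series (lev f).
  apply: (ex_series_le _ (lev g)); last by exists t.
  move=> k; rewrite /norm /= /abs /= Rabs_pos_eq; last by apply: lev_ge0 => x; case: (H x).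
  case: k => [|k] /=; apply: Rsum_le => i; [exact: (proj2 (H (inl i))) | exact: (proj2 (H (inr (k, i))))].
exists (Series (lev f)); apply/Xsum_lev; exact: Series_correct. Qed.

Lemma tonelli_X (T : X -> X -> R) (o : X -> R) S :
  (forall x y, 0 <= T x y) -> (forall x, is_Xsum (T x) (o x)) -> is_Xsum o S ->
  exists i : X -> R, (forall y, is_Xsum (fun x => T x y) (i y)) /\ is_Xsum i S.
Proof.
move=> T0 HT /Xsum_lev HS.
pose a l k := lev (fun x => lev (T x) k) l.
have Ha : forall l, is_series (a l) (lev o l).
  move=> l; apply: (lev_series (F := fun x k => lev (T x) k)) => x; apply/Xsum_lev; exact: HT.
have a0 : forall l k, 0 <= a l k by move=> l k; apply: lev_ge0 => x; exact: lev_ge0.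
have [exl Hs] := tonelli_nat a0 Ha HS.
have Eswap : forall l k, a l k = lev (fun y => lev (fun x => T x y) l) k.
  move=> l k; rewrite /a -lev_swap; done.
have exy : forall y, ex_series (lev (fun x => T x y)).
  move=> y; apply: (ex_series_le _ (fun l => a l (levi y))); last exact: exl.
  move=> l; rewrite /norm /= /abs /= Rabs_pos_eq; last by apply: lev_ge0.
  rewrite Eswap. apply: (lev_term (f := fun y => lev (fun x => T x y) l)) => y'; exact: lev_ge0.
exists (fun y => Series (lev (fun x => T x y))); split.
  move=> y; apply/Xsum_lev; exact: Series_correct.
apply/Xsum_lev. apply: is_series_ext Hs => k.
have E := lev_series (F := fun y l => lev (fun x => T x y) l) (l:=k) (fun y => Series_correct _ (exy y)).
rewrite -(is_series_unique _ _ E). apply: Series_ext => l; by rewrite Eswap.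
Qed.

End XSums.

Section Abstract.
Variables (V : finType) (c : nat).
Local Notation X := (V + W c)%type.
Variables (rr : X -> X -> R) (out : X -> R).
Hypothesis r0 : forall x y, 0 <= rr x y.
Hypothesis rout : forall x, is_Xsum (rr x) (out x).
Hypothesis outB : exists B, forall x, out x <= B.

Definition l1 (mu : X -> R) := exists t, is_Xsum (fun x => Rabs (mu x)) t.
Definition bal (mu : X -> R) (y : X) := is_Xsum (fun x => mu x * rr x y) (mu y * out y).

Lemma out0 x : 0 <= out x.
Proof. apply: (Xsum_ge0 (f := rr x)) => // y. Qed.

Lemma tonelli_nonneg (nu : X -> R) : (forall x, 0 <= nu x) -> l1 nu ->
  exists (i : X -> R) S, (forall y, is_Xsum (fun x => nu x * rr x y) (i y)) /\
    is_Xsum i S /\ is_Xsum (fun x => nu x * out x) S.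
Proof.
move=> nu0 [t Ht].
have [B HB] := outB.
have Ho : exists S, is_Xsum (fun x => nu x * out x) S.
  have Hg : is_Xsum (fun x => B * Rabs (nu x)) (B * t) by apply: Xsum_scal.
  apply: (Xsum_le (g := fun x => B * Rabs (nu x))) Hg => x; split.
    by apply: Rmult_le_pos => //; apply: out0.
  rewrite Rabs_pos_eq // Rmult_comm. apply: Rmult_le_compat_r => //.
have [S HS] := Ho.
have HT : forall x, is_Xsum (fun y => nu x * rr x y) (nu x * out x).
  move=> x; exact: Xsum_scal.
have [i [Hi HiS]] := tonelli_X (T := fun x y => nu x * rr x y) (fun x y => Rmult_le_pos _ _ (nu0 x) (r0 x y)) HT HS.
by exists i, S.
Qed.

Lemma l1_le (mu nu : X -> R) : l1 mu -> (forall x, Rabs (nu x) <= Rabs (mu x)) -> l1 nu.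
Proof. move=> [t Ht] H. apply: (Xsum_le (g := fun x => Rabs (mu x))) Ht => x.
split; [exact: Rabs_pos | exact: H]. Qed.

Lemma fubini_signed (mu : X -> R) : l1 mu ->
  exists (j : X -> R) S, (forall y, is_Xsum (fun x => mu x * rr x y) (j y)) /\
    is_Xsum j S /\ is_Xsum (fun x => mu x * out x) S.
Proof.
move=> Hmu.
pose mp x := (Rabs (mu x) + mu x) / 2. pose mn x := (Rabs (mu x) - mu x) / 2.
have mp0 : forall x, 0 <= mp x.
  move=> x; rewrite /mp; move: (Rle_abs (- mu x)); rewrite Rabs_Ropp; lra.
have mn0 : forall x, 0 <= mn x.
  move=> x; rewrite /mn; move: (Rle_abs (mu x)); lra.
have l1p : l1 mp.
  apply: (l1_le (mu:=mu) (nu:=mp) Hmu) => x; rewrite Rabs_pos_eq // /mp.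
  move: (Rle_abs (mu x)) (Rle_abs (- mu x)); rewrite Rabs_Ropp; lra.
have l1n : l1 mn.
  apply: (l1_le (mu:=mu) (nu:=mn) Hmu) => x; rewrite Rabs_pos_eq // /mn.
  move: (Rle_abs (mu x)) (Rle_abs (- mu x)); rewrite Rabs_Ropp; lra.
have [ip [Sp [Hip [HSp HOp]]]] := tonelli_nonneg mp0 l1p.
have [iN [Sn [Hin [HSn HOn]]]] := tonelli_nonneg mn0 l1n.
exists (fun y => ip y - iN y), (Sp - Sn); split; [|split].
- move=> y. apply: (Xsum_eq (Xsum_plus (Hip y) (Xsum_scal (a:=-1) (Hin y)))); first ring.
  move=> x; rewrite /mp /mn; field.
- apply: (Xsum_eq (Xsum_plus HSp (Xsum_scal (a:=-1) HSn))) => *; ring.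
- apply: (Xsum_eq (Xsum_plus HOp (Xsum_scal (a:=-1) HOn))); first ring.
  move=> x; rewrite /mp /mn; field.
Qed.

Lemma Xsum_zero_at (d : X -> R) y0 : is_Xsum d 0 -> (forall y, y <> y0 -> d y = 0) -> d y0 = 0.
Proof.
move=> Hd Hz.
have [Hlt|[Heq|Hgt]] := Rtotal_order (d y0) 0.
- exfalso.
  have d0 : forall y, 0 <= - d y.
    move=> y; case: (Classical_Prop.classic (y = y0)) => [->|ne]; [lra | rewrite Hz //; lra].
  have Hd' : is_Xsum (fun y => - d y) 0.
    apply: (Xsum_eq (Xsum_scal (a:=-1) Hd)) => *; ring.
  move: (Xsum_term y0 d0 Hd'); lra.
- exact: Heq.
- exfalso.
  have d0 : forall y, 0 <= d y.
    move=> y; case: (Classical_Prop.classic (y = y0)) => [->|ne]; [lra | rewrite Hz //; lra].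
  move: (Xsum_term y0 d0 Hd); lra.
Qed.

Lemma conservation (mu : X -> R) y0 : l1 mu -> (forall y, y <> y0 -> bal mu y) -> bal mu y0.
Proof.
move=> Hmu Hb.
have [j [S [Hj [HjS HoS]]]] := fubini_signed Hmu.
pose d y := mu y * out y - j y.
have Hd : is_Xsum d 0.
  apply: (Xsum_eq (Xsum_plus HoS (Xsum_scal (a:=-1) HjS))); first ring.
  move=> x; rewrite /d; ring.
have Hz : forall y, y <> y0 -> d y = 0.
  move=> y ne; rewrite /d (Xsum_unique (Hj y) (Hb y ne)); ring.
have := Xsum_zero_at Hd Hz; rewrite /d => E.
rewrite /bal; apply: (Xsum_eq (Hj y0)) => //; lra.
Qed.

Lemma bal_scal a mu y : bal mu y -> bal (fun x => a * mu x) y.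
Proof. move=> H; rewrite /bal; apply: (Xsum_eq (Xsum_scal (a:=a) H)) => *; ring. Qed.

Lemma bal_plus mu nu y : bal mu y -> bal nu y -> bal (fun x => mu x + nu x) y.
Proof. move=> H1 H2; rewrite /bal; apply: (Xsum_eq (Xsum_plus H1 H2)) => *; ring. Qed.

Lemma l1_scal a mu : l1 mu -> l1 (fun x => a * mu x).
Proof. move=> [t Ht]; exists (Rabs a * t).
apply: (Xsum_eq (Xsum_scal (a:=Rabs a) Ht)) => // x; by rewrite Rabs_mult. Qed.

Lemma l1_plus mu nu : l1 mu -> l1 nu -> l1 (fun x => mu x + nu x).
Proof. move=> [t Ht] [u Hu].
have [s Hs] := Xsum_le (g := fun x => Rabs (mu x) + Rabs (nu x)) (f := fun x => Rabs (mu x + nu x))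
  (fun x => conj (Rabs_pos _) (Rabs_triang _ _)) (Xsum_plus Ht Hu).
by exists s. Qed.

Hypothesis irr : forall x y : X, clos_refl_trans _ (fun x y => x <> y /\ 0 < rr x y) x y.

Lemma pos_prop (mu : X -> R) : l1 mu -> (forall y, bal mu y) ->
  forall x0, 0 < mu x0 -> forall y, 0 < mu y.
Proof.
move=> Hmu Hb.
have Habs : forall x, 0 <= Rabs (mu x) by move=> x; exact: Rabs_pos.
have [i [S [Hi [HiS HoS]]]] := tonelli_nonneg Habs (l1_le (nu:=fun x => Rabs (mu x)) Hmu (fun x => Req_le _ _ (Rabs_Rabsolu (mu x)))).
have Hle : forall y, Rabs (mu y) * out y <= i y.
  move=> y.
  have Ha : is_Xsum (fun x => Rabs (mu x * rr x y)) (i y).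
    apply: (Xsum_eq (Hi y)) => // x; rewrite Rabs_mult (Rabs_pos_eq (rr x y)) //.
  have [s [Hs Hsle]] := Xsum_abs Ha.
  rewrite (Xsum_unique Hs (Hb y)) Rabs_mult (Rabs_pos_eq (out y)) // in Hsle.
  exact: out0.
have Heq : forall y, i y = Rabs (mu y) * out y.
  pose e y := i y - Rabs (mu y) * out y.
  have He : is_Xsum e 0.
    apply: (Xsum_eq (Xsum_plus HiS (Xsum_scal (a:=-1) HoS))); first ring.
    move=> x; rewrite /e; ring.
  have e0 : forall y, 0 <= e y by move=> y; rewrite /e; move: (Hle y); lra.
  move=> y; move: (Xsum_term y e0 He); rewrite /e; move: (Hle y); lra.
have step : forall x y, 0 < rr x y -> 0 < mu x -> 0 < mu y.
  move=> x y rxy mx.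
  case: (Rlt_le_dec 0 (mu y)) => // my; exfalso.
  have oy := out0 y.
  pose g x' := (Rabs (mu x') + mu x') * rr x' y.
  have Hg : is_Xsum g (i y + mu y * out y).
    apply: (Xsum_eq (Xsum_plus (Hi y) (Hb y))) => // x'; rewrite /g; ring.
  have g0 : forall x', 0 <= g x'.
    move=> x'; rewrite /g; apply: Rmult_le_pos => //.
    move: (Rle_abs (- mu x')); rewrite Rabs_Ropp; lra.
  move: (Xsum_term x g0 Hg). rewrite /g Heq Rabs_pos_eq; last lra.
  rewrite Rabs_left1 //.
  have : 0 < (mu x + mu x) * rr x y by apply: Rmult_lt_0_compat => //; lra.
  lra.
move=> x0 mx0 y; move: mx0.
elim: (irr x0 y) => [a b [_ Hab]|a|a b d _ IH1 _ IH2].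
- move=> ma; exact: step Hab ma.
- done.
- by move=> ma; apply: IH2; apply: IH1.
Qed.

Lemma uniqueness (mu : X -> R) : l1 mu -> (forall y, bal mu y) -> is_Xsum mu 0 -> forall x, mu x = 0.
Proof.
move=> Hmu Hb Hs.
have nopos : forall nu : X -> R, l1 nu -> (forall y, bal nu y) -> is_Xsum nu 0 -> forall x, nu x <= 0.
  move=> nu Hnu Hbn Hsn x.
  case: (Rle_lt_dec (nu x) 0) => // nx; exfalso.
  have all := pos_prop Hnu Hbn nx.
  have n0 : forall y, 0 <= nu y by move=> y; move: (all y); lra.
  move: (Xsum_term x n0 Hsn); lra.
move=> x.
have h1 := nopos mu Hmu Hb Hs x.
have h2 := nopos (fun x => -1 * mu x) (l1_scal (-1) Hmu) (fun y => bal_scal (a:=-1) (Hb y))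
  (Xsum_eq (Xsum_scal (a:=-1) Hs) (Rmult_0_r _) (fun _ => erefl)) x.
simpl in h2; lra.
Qed.

End Abstract.

Section Bits.
Variable c : nat.
Implicit Types (f b : {ffun 'I_c -> bool}) (i : 'I_c).

Lemma setbit_at f i x : setbit f i x i = x.
Proof. by rewrite /setbit ffunE eqxx. Qed.

Lemma setbit_id f i : setbit f i (f i) = f.
Proof. apply/ffunP => j; rewrite /setbit ffunE; by case: eqP => [->|]. Qed.

Lemma setbit_ne f i : setbit f i true != setbit f i false.
Proof. apply/eqP => E; have := congr1 (fun g : {ffun _ -> bool} => g i) E; by rewrite !setbit_at. Qed.

Lemma agree_char f i b : [forall j, (j != i) ==> (b j == f j)] = (b == setbit f i true) || (b == setbit f i false).
Proof.
apply/idP/idP.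
- move/forallP => H.
  have E : b = setbit f i (b i).
    apply/ffunP => j; rewrite /setbit ffunE; case: eqP => [->//|/eqP ne].
    by move: (H j); rewrite ne /= => /eqP.
  by case: (b i) E => ->; rewrite eqxx ?orbT.
- case/orP => /eqP ->; apply/forallP => j; apply/implyP => ne;
  by rewrite /setbit ffunE (negbTE ne).
Qed.

Lemma agree_char' f i b : [forall j, (j != i) ==> (f j == b j)] = (b == setbit f i true) || (b == setbit f i false).
Proof. rewrite -agree_char; apply: eq_forallb => j; by rewrite [f j == _]eq_sym. Qed.

Lemma split_sum (P : pred {ffun 'I_c -> bool}) (F : {ffun 'I_c -> bool} -> R) b1 b2 :
  b1 != b2 -> (forall b, P b = (b == b1) || (b == b2)) ->
  Rsum (fun b => if P b then F b else 0) = F b1 + F b2.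
Proof.
move=> ne HP; rewrite /Rsum (bigD1 b1) //= HP eqxx /=.
rewrite (bigD1 b2) /=; last by rewrite eq_sym ne.
rewrite HP eqxx orbT big1 ?Rplus_0_r //.
move=> b /andP [ne1 ne2]; by rewrite HP (negbTE ne1) (negbTE ne2).
Qed.

End Bits.

Lemma sumn_zero (a : nat -> R) N : (forall k, (k <= N)%coq_nat -> a k = 0) -> sum_n a N = 0.
Proof. elim: N => [|N IH] H; first by rewrite sum_O H //; lia.
rewrite sumn_Sn IH; last by move=> k Hk; apply: H; lia.
rewrite H; last lia. by rewrite Rplus_0_r. Qed.

Lemma is_series_eventually (a : nat -> R) N : (forall m, (N < m)%coq_nat -> a m = 0) -> is_series a (sum_n a N).
Proof. move=> H. apply: (@is_series_decr_n _ _ a (S N)); first lia.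
rewrite /=. have -> : plus (sum_n a N) (opp (sum_n a N)) = 0 :> R by rewrite /plus /opp /=; ring.
apply: is_series_zero => k; apply: H; lia. Qed.

Lemma is_series_shift0 (a : nat -> R) N L : (forall m, (m < N)%coq_nat -> a m = 0) ->
  is_series (fun j => a (N + j)%coq_nat) L -> is_series a L.
Proof. move=> H HL. case: N H HL => [|N] H HL.
  apply: is_series_ext HL => j; done.
apply: (@is_series_decr_n _ _ a (S N)); first lia.
rewrite /= (sumn_zero (N:=N)) => [|k Hk]; last by apply: H; lia.
have -> : plus L (opp 0) = L :> R by rewrite /plus /opp /=; ring.
exact: HL. Qed.

Lemma sum_n_big (a : nat -> R) N : sum_n a N = \big[Rplus/0]_(0 <= i < N.+1) a i.
Proof. elim: N => [|N IH]; first by rewrite sum_O big_nat1.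
by rewrite sumn_Sn IH (big_nat_recr N.+1). Qed.

Lemma sum_n_rev (a : nat -> R) N : sum_n (fun m => a (N - m)%coq_nat) N = sum_n a N.
Proof. rewrite !sum_n_big big_nat_rev /=. apply: eq_big_nat => i /andP [_ Hi].
f_equal. move: Hi => /ltP Hi. lia. Qed.


Section Model.
Variables (c K : nat) (V : finType) (M : model c K V).
Hypothesis hM : model_ok M.
Local Notation X := (V + W c)%type.

Definition outX (x : X) : R := match x with inl v => outV M v | inr n => outW M n end.

Lemma ratei0 i k b b' : (k <= Z.of_nat K)%Z -> 0 <= rate_i M i k b b'.
Proof. case: hM => hr _ => Hk; have [? [? [? ?]]] := hr i k Hk; by case: b; case: b'. Qed.

Lemma rateWW0 n m : 0 <= rateWW M n m.
Proof. rewrite /rateWW; apply: Rsum_ge0 => i /=.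
case: ifP => _; last lra.
case E: (_ <=? _)%Z; last lra. apply: ratei0; exact/Z.leb_le. Qed.

Lemma rate0 x y : 0 <= rate M x y.
Proof. case: hM => _ [_ [hvv [hvw [hwv _]]]].
case: x => [v|n]; case: y => [v'|m] /=; auto; exact: rateWW0. Qed.

Lemma out_row (n : W c) m : Rsum (fun b => rateWW M n (m, b)) =
  if (Z.of_nat m - Z.of_nat n.1 <=? Z.of_nat K)%Z
  then Rsum (fun i => rtot M i (Z.of_nat m - Z.of_nat n.1) (n.2 i)) else 0.
Proof.
rewrite /rateWW /Rsum exchange_big /=.
case: (_ <=? _)%Z.
- apply: eq_bigr => i _.
  set k := (Z.of_nat m - Z.of_nat n.1)%Z.
  transitivity (rate_i M i k (n.2 i) (setbit n.2 i true i) + rate_i M i k (n.2 i) (setbit n.2 i false i)).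
    apply: (@split_sum c (fun b => [forall j, (j != i) ==> (b j == n.2 j)])
       (fun b => rate_i M i k (n.2 i) (b i))) => [|b]; [exact: setbit_ne | exact: agree_char].
  by rewrite /rtot !setbit_at.
- apply: big1 => i _; apply: big1 => b _; by case: ifP.
Qed.

Definition iterm (mu : W c -> R) (f : {ffun 'I_c -> bool}) (m0 : nat) (k : Z) (i : 'I_c) : R :=
  if f i then ra M i k * mu (m0, setbit f i false) + rc M i k * mu (m0, f)
  else rb M i k * mu (m0, f) + rd M i k * mu (m0, setbit f i true).

Lemma in_col (mu : W c -> R) (n : W c) m : Rsum (fun b => mu (m, b) * rateWW M (m, b) n) =
  if (Z.of_nat n.1 - Z.of_nat m <=? Z.of_nat K)%Z
  then Rsum (iterm mu n.2 m (Z.of_nat n.1 - Z.of_nat m)) else 0.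
Proof.
rewrite /rateWW /Rsum.
under eq_bigr => b _ do rewrite big_distrr /=.
rewrite exchange_big /=.
case: (_ <=? _)%Z.
- apply: eq_bigr => i _.
  set k := (Z.of_nat n.1 - Z.of_nat m)%Z.
  transitivity (Rsum (fun b : {ffun 'I_c -> bool} => if [forall j, (j != i) ==> (n.2 j == b j)] then
      mu (m, b) * rate_i M i k (b i) (n.2 i) else 0)).
    rewrite /Rsum; apply: eq_bigr => b _; case: ifP => _; ring.
  transitivity (mu (m, setbit n.2 i true) * rate_i M i k (setbit n.2 i true i) (n.2 i) +
                mu (m, setbit n.2 i false) * rate_i M i k (setbit n.2 i false i) (n.2 i)).
    apply: (@split_sum c (fun b => [forall j, (j != i) ==> (n.2 j == b j)])
       (fun b => mu (m, b) * rate_i M i k (b i) (n.2 i))) => [|b]; [exact: setbit_ne | exact: agree_char'].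
  rewrite /iterm !setbit_at.
  have E := setbit_id n.2 i.
  case: (n.2 i) E => E; rewrite E /=; ring.
- apply: big1 => i _; apply: big1 => b _; case: ifP => _; ring.
Qed.

Lemma rtot_ex (f : {ffun 'I_c -> bool}) :
  ex_series (fun j => Rsum (fun i => rtot M i (Z.of_nat K - Z.of_nat j) (f i))).
Proof.
case: hM => _ [hex _].
have H : forall i, ex_series (fun j => rtot M i (Z.of_nat K - Z.of_nat j) (f i)).
  move=> i; have [[la Ha] [[lb Hb] [[lc Hc] [ld Hd]]]] := hex i.
  rewrite /rtot; case: (f i) => /=.
  - exists (lc + ld); exact: (is_series_plus _ _ _ _ Hc Hd).
  - exists (la + lb); exact: (is_series_plus _ _ _ _ Ha Hb).
exists (Rsum (fun i => Series (fun j => rtot M i (Z.of_nat K - Z.of_nat j) (f i)))).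
apply: Rsum_series => i; exact: Series_correct.
Qed.

Lemma outW_eq (n : W c) :
  outW M n = Series (fun j => Rsum (fun i => rtot M i (Z.of_nat K - Z.of_nat j) (n.2 i))).
Proof.
case: hM => _ [_ [_ [_ [_ [_ [hwvtot _]]]]]].
set H := fun j => Rsum (fun i => rtot M i (Z.of_nat K - Z.of_nat j) (n.2 i)).
pose N := (n.1 + K)%coq_nat.
set G := fun m => Rsum (fun b => rateWW M n (m, b)).
have GN : forall m, (N < m)%coq_nat -> G m = 0.
  move=> m Hm; rewrite /G out_row.
  by have -> : (Z.of_nat m - Z.of_nat n.1 <=? Z.of_nat K)%Z = false by apply/Z.leb_gt; lia.
have SG : Series G = sum_n G N by apply: is_series_unique; exact: is_series_eventually.
have GH : sum_n G N = sum_n H N.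
  rewrite -[RHS]sum_n_rev. apply: sum_n_ext_loc => m Hm.
  rewrite /G out_row.
  have -> : (Z.of_nat m - Z.of_nat n.1 <=? Z.of_nat K)%Z = true by apply/Z.leb_le; lia.
  rewrite /H; apply: Rsum_ext => i; f_equal; lia.
have HS := Series_correct _ (rtot_ex n.2).
have Htail : is_series (fun k => H (S N + k)%coq_nat) (Series H - sum_n H N).
  apply: (@is_series_incr_n _ _ H (S N)); first lia.
  rewrite /=. have -> : plus (Series H - sum_n H N) (sum_n H N) = Series H :> R by rewrite /plus /=; ring.
  exact: HS.
have RV : Rsum (fun v => QWV M n v) = Series H - sum_n H N.
  rewrite hwvtot /rate_to_V. apply: is_series_unique.
  apply: is_series_ext Htail => j. rewrite /H; apply: Rsum_ext => i; f_equal; lia.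
rewrite /outW -/G SG GH RV. ring.
Qed.

Lemma rout x : is_Xsum (rate M x) (outX x).
Proof.
case: hM => _ [_ [_ [_ [_ [_ [_ hvex]]]]]].
case: x => [v|n]; rewrite /is_Xsum /=.
- rewrite /outV. have -> : Rsum (fun v' => QVV M v v') + Series (fun m0 => Rsum (fun b => QVW M v (m0, b))) -
    Rsum (fun v0 => QVV M v v0) = Series (fun m0 => Rsum (fun b => QVW M v (m0, b))) by ring.
  exact: Series_correct.
- rewrite /outW. have -> : Series (fun m0 => Rsum (fun b => rateWW M n (m0, b))) + Rsum (fun v => QWV M n v) -
    Rsum (fun v => QWV M n v) = Series (fun m0 => Rsum (fun b => rateWW M n (m0, b))) by ring.
  apply: Series_correct. exists (sum_n (fun m0 => Rsum (fun b => rateWW M n (m0, b))) (n.1 + K)%coq_nat).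
  apply: is_series_eventually => m Hm. rewrite out_row.
  by have -> : (Z.of_nat m - Z.of_nat n.1 <=? Z.of_nat K)%Z = false by apply/Z.leb_gt; lia.
Qed.

Lemma outB : exists B, forall x, outX x <= B.
Proof.
case: hM => hr [hex _].
pose U j := Rsum (fun i => ra M i (Z.of_nat K - Z.of_nat j) + rb M i (Z.of_nat K - Z.of_nat j)
   + rc M i (Z.of_nat K - Z.of_nat j) + rd M i (Z.of_nat K - Z.of_nat j)).
have exU : ex_series U.
  exists (Rsum (fun i => Series (fun j => ra M i (Z.of_nat K - Z.of_nat j)) + Series (fun j => rb M i (Z.of_nat K - Z.of_nat j))
   + Series (fun j => rc M i (Z.of_nat K - Z.of_nat j)) + Series (fun j => rd M i (Z.of_nat K - Z.of_nat j)))).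
  apply: Rsum_series => i. have [ea [eb [ec ed]]] := hex i.
  apply: is_series_plus; [apply: is_series_plus; [apply: is_series_plus|]|]; exact: Series_correct.
have ov0 : forall v, 0 <= outV M v.
  move=> v; have := rout (x:=inl v); apply: Xsum_ge0 => y; exact: rate0.
exists (Series U + Rsum (fun v => outV M v)) => x.
have SU0 : 0 <= Series U.
  apply: (series_ge0 (a := U)); last exact: Series_correct.
  move=> j; apply: Rsum_ge0 => i; have [? [? [? ?]]] := hr i (Z.of_nat K - Z.of_nat j)%Z ltac:(lia); lra.
have RV0 : 0 <= Rsum (fun v => outV M v) by apply: Rsum_ge0.
case: x => [v|n] /=.
- move: (Rsum_term (f := fun v => outV M v) v ov0); lra.
- rewrite outW_eq.
  suff : Series (fun j => Rsum (fun i => rtot M i (Z.of_nat K - Z.of_nat j) (n.2 i))) <= Series U by lra.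
  apply: Series_le => // j; split.
    apply: Rsum_ge0 => i; rewrite /rtot; apply: Rplus_le_le_0_compat; apply: ratei0; lia.
  apply: Rsum_le => i; have [? [? [? ?]]] := hr i (Z.of_nat K - Z.of_nat j)%Z ltac:(lia).
  rewrite /rtot; case: (n.2 i) => /=; lra.
Qed.

Definition rinner (mu : X -> R) (n : W c) : Prop :=
  is_series (fun j => Rsum (iterm (fun w => mu (inr w)) n.2 (n.1 - K + j)%nat (Z.of_nat K - Z.of_nat j)))
    (Series (fun j => Rsum (fun i => rtot M i (Z.of_nat K - Z.of_nat j) (n.2 i))) * mu (inr n)).

Lemma high_bal (mu : X -> R) (n : W c) : (K <= n.1)%nat -> rinner mu n ->
  bal (rate M) outX mu (inr n).
Proof.
case: hM => _ [_ [_ [_ [_ [hvwK _]]]]].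
move=> HK Hin; rewrite /bal /is_Xsum /=.
have -> : Rsum (fun v => mu (inl v) * QVW M v n) = 0.
  rewrite (Rsum_ext (g := fun _ => 0)) ?Rsum0 // => v; rewrite hvwK //; ring.
rewrite Rminus_0_r outW_eq Rmult_comm.
apply: (is_series_shift0 (N := (n.1 - K)%nat)).
  move=> m Hm. rewrite (in_col (fun w => mu (inr w))).
  by have -> : (Z.of_nat n.1 - Z.of_nat m <=? Z.of_nat K)%Z = false by apply/Z.leb_gt; lia.
apply: is_series_ext Hin => j.
rewrite (in_col (fun w => mu (inr w))).
have -> : (Z.of_nat n.1 - Z.of_nat (n.1 - K + j)%coq_nat <=? Z.of_nat K)%Z = true by apply/Z.leb_le; lia.
have -> : (Z.of_nat n.1 - Z.of_nat (n.1 - K + j)%coq_nat = Z.of_nat K - Z.of_nat j)%Z by lia.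
done.
Qed.

End Model.

Unset Implicit Arguments.
From HB Require Import structures.
From mathcomp Require Import ssralg matrix mxalgebra.
From mathcomp Require boolp.

Definition CC : Type := C.
HB.instance Definition _ := boolp.gen_eqMixin CC.
HB.instance Definition _ := boolp.gen_choiceMixin CC.

Lemma CC_addA : associative (Cplus : CC -> CC -> CC).
Proof. move=> x y z; by rewrite Cplus_assoc. Qed.
Lemma CC_addC : commutative (Cplus : CC -> CC -> CC).
Proof. move=> x y; exact: Cplus_comm. Qed.
Lemma CC_add0 : left_id (RtoC 0 : CC) Cplus.
Proof. move=> x; exact: Cplus_0_l. Qed.
Lemma CC_addN : left_inverse (RtoC 0 : CC) Copp Cplus.
Proof. move=> x; rewrite Cplus_comm; exact: Cplus_opp_r. Qed.
HB.instance Definition _ := GRing.isZmodule.Build CC CC_addA CC_addC CC_add0 CC_addN.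
Lemma CC_mulA : associative (Cmult : CC -> CC -> CC).
Proof. move=> x y z; by rewrite Cmult_assoc. Qed.
Lemma CC_mulC : commutative (Cmult : CC -> CC -> CC).
Proof. move=> x y; exact: Cmult_comm. Qed.
Lemma CC_mul1 : left_id (RtoC 1 : CC) Cmult.
Proof. move=> x; exact: Cmult_1_l. Qed.
Lemma CC_mulD : left_distributive (Cmult : CC -> CC -> CC) Cplus.
Proof. move=> x y z; exact: Cmult_plus_distr_r. Qed.
Lemma CC_10 : (RtoC 1 : CC) != RtoC 0.
Proof. apply/eqP; exact: C1_nz. Qed.
HB.instance Definition _ := GRing.Zmodule_isComNzRing.Build CC CC_mulA CC_mulC CC_mul1 CC_mulD CC_10.
Lemma CC_mulV : forall x : CC, x != 0%R -> (Cmult (Cinv x) x : CC) = 1%R.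
Proof. move=> x /eqP H; exact: Cinv_l. Qed.
Lemma CC_inv0 : (Cinv (0%R : CC) : CC) = 0%R.
Proof. change (Cinv (RtoC 0) = RtoC 0). unfold Cinv; simpl; unfold RtoC; f_equal; unfold Rdiv; ring. Qed.
HB.instance Definition _ := GRing.ComNzRing_isField.Build CC CC_mulV CC_inv0.

Open Scope ring_scope.
Import GRing.Theory.

Lemma square_inj_surj (I J : finType) (A : I -> J -> CC) : #|I| = #|J| ->
  (forall x : I -> CC, (forall j, \sum_i x i * A i j = 0) -> forall i, x i = 0) ->
  forall b : J -> CC, exists x : I -> CC, forall j, \sum_i x i * A i j = b j.
Proof.
move=> e Hinj b.
pose cJ (l : 'I_#|I|) : J := enum_val (cast_ord e l).
pose rJ (j : J) : 'I_#|I| := cast_ord (esym e) (enum_rank j).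
have cJK : forall j, cJ (rJ j) = j.
  by move=> j; rewrite /cJ /rJ cast_ordKV enum_rankK.
pose M : 'M[CC]_(#|I|, #|I|) := \matrix_(k, l) A (enum_val k) (cJ l).
have key : forall (v : 'rV[CC]_#|I|) j,
    (v *m M) ord0 (rJ j) = \sum_i v ord0 (enum_rank i) * A i j.
  move=> v j; rewrite !mxE [RHS](reindex (@enum_val I predT)) /=; last first.
    by apply: onW_bij; exact: enum_val_bij.
  by apply: eq_bigr => k _; rewrite mxE cJK enum_valK.
have fr : row_free M.
  apply: inj_row_free => v Hv.
  have Hx := Hinj (fun i => v ord0 (enum_rank i)).
  apply/rowP => k; rewrite mxE.
  have -> : k = enum_rank (enum_val k) by rewrite enum_valK.
  apply: Hx => j. by rewrite -key Hv mxE.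
rewrite row_free_unit in fr.
pose u : 'rV[CC]_#|I| := \row_l b (cJ l).
exists (fun i => (u *m invmx M) ord0 (enum_rank i)).
move=> j. by rewrite -key mulmxKV // mxE cJK.
Qed.

Close Scope ring_scope.
Open Scope R_scope.
Lemma square_inj_surj' (I J : finType) (A : I -> J -> C) : #|I| = #|J| ->
  (forall x : I -> C, (forall j, \big[Cplus/RtoC 0]_i Cmult (x i) (A i j) = RtoC 0) -> forall i, x i = RtoC 0) ->
  forall b : J -> C, exists x : I -> C, forall j, \big[Cplus/RtoC 0]_i Cmult (x i) (A i j) = b j.
Proof. move=> e H b. exact: (@square_inj_surj I J A e H b). Qed.

Set Implicit Arguments.
Unset Strict Implicit.

Set Implicit Arguments.
Unset Strict Implicit.
Open Scope R_scope.

Lemma sum_n_Re (a : nat -> C) n : sum_n (fun k => Re (a k)) n = Re (sum_n a n).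
Proof. elim: n => [|n IH]; first by rewrite !sum_O.
by rewrite !sum_Sn IH. Qed.
Lemma sum_n_Im (a : nat -> C) n : sum_n (fun k => Im (a k)) n = Im (sum_n a n).
Proof. elim: n => [|n IH]; first by rewrite !sum_O.
by rewrite !sum_Sn IH. Qed.

Lemma Re_series (a : nat -> C) l : is_series a l -> is_series (fun n => Re (a n)) (Re l).
Proof. move=> H; apply: (proj2 (filterlim_locally (F := eventually) _ _)) => eps.
have H2 := proj1 (filterlim_locally _ _) H eps.
eapply filter_imp; last exact: H2. move=> n [H1 _] /=; rewrite sum_n_Re; exact: H1. Qed.
Lemma Im_series (a : nat -> C) l : is_series a l -> is_series (fun n => Im (a n)) (Im l).
Proof. move=> H; apply: (proj2 (filterlim_locally (F := eventually) _ _)) => eps.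
have H2 := proj1 (filterlim_locally _ _) H eps.
eapply filter_imp; last exact: H2. move=> n [_ H1] /=; rewrite sum_n_Im; exact: H1. Qed.

Lemma Re_Csum (I : finType) (F : I -> C) : Re (Csum F) = Rsum (fun i => Re (F i)).
Proof. rewrite /Csum /Rsum; elim/big_rec2: _ => [|i y1 y2 _ <-] //. Qed.
Lemma Im_Csum (I : finType) (F : I -> C) : Im (Csum F) = Rsum (fun i => Im (F i)).
Proof. rewrite /Csum /Rsum; elim/big_rec2: _ => [|i y1 y2 _ <-] //. Qed.
Lemma Cmod_Csum (I : finType) (F : I -> C) : Cmod (Csum F) <= Rsum (fun i => Cmod (F i)).
Proof. rewrite /Csum /Rsum; elim/big_rec2: _ => [|i y1 y2 _ H].
  by rewrite Cmod_0; lra.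
apply: Rle_trans (Cmod_triangle _ _) _; lra. Qed.

Lemma Re_minus (a b : C) : Re (Cminus a b) = Re a - Re b. Proof. reflexivity. Qed.
Lemma Im_minus (a b : C) : Im (Cminus a b) = Im a - Im b. Proof. reflexivity. Qed.
Lemma Re_multR (a : C) r : Re (Cmult a (RtoC r)) = Re a * r. Proof. rewrite /= /Re /Im; ring. Qed.
Lemma Im_multR (a : C) r : Im (Cmult a (RtoC r)) = Im a * r. Proof. rewrite /= /Re /Im; ring. Qed.
Lemma Re_Rmult (a : C) r : Re (Cmult (RtoC r) a) = r * Re a. Proof. rewrite /= /Re /Im; ring. Qed.
Lemma Im_Rmult (a : C) r : Im (Cmult (RtoC r) a) = r * Im a. Proof. rewrite /= /Re /Im; ring. Qed.
Lemma Re_plus (a b : C) : Re (Cplus a b) = Re a + Re b. Proof. reflexivity. Qed.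
Lemma Im_plus (a b : C) : Im (Cplus a b) = Im a + Im b. Proof. reflexivity. Qed.

Lemma Im_le_Cmod (z : C) : Rabs (Im z) <= Cmod z.
Proof. apply: Rle_trans (Rmax_r _ _) (Rmax_Cmod z). Qed.

Section Main.
Variables (c K : nat) (V : finType) (M : model c K V).
Hypothesis hM : model_ok M.
Hypothesis hirr : irreducible M.
Local Notation X := (V + W c)%type.
Local Notation rr := (rate M).
Local Notation out := (outX M).

Lemma r0' : forall x y, 0 <= rr x y. Proof. move=> x y; exact: rate0. Qed.
Lemma rout' : forall x, is_Xsum (rr x) (out x). Proof. move=> x; exact: rout. Qed.
Lemma outB' : exists B, forall x, out x <= B. Proof. exact: outB. Qed.

Definition cbalX (phi : X -> C) (y : X) : Prop :=
  is_series (fun m => Csum (fun b => Cmult (phi (inr (m, b))) (RtoC (rr (inr (m, b)) y))))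
    (Cminus (Cmult (phi y) (RtoC (out y))) (Csum (fun v => Cmult (phi (inl v)) (RtoC (rr (inl v) y))))).

Lemma cbal_Re phi y : cbalX phi y -> bal rr out (fun x => Re (phi x)) y.
Proof. move=> /Re_series H. rewrite /bal /is_Xsum.
rewrite Re_minus Re_multR Re_Csum (Rsum_ext (g := fun v => Re (phi (inl v)) * rr (inl v) y)) in H;
  last by move=> v; rewrite Re_multR.
apply: is_series_ext H => m; rewrite Re_Csum; apply: Rsum_ext => b; exact: Re_multR.
Qed.

Lemma cbal_Im phi y : cbalX phi y -> bal rr out (fun x => Im (phi x)) y.
Proof. move=> /Im_series H. rewrite /bal /is_Xsum.
rewrite Im_minus Im_multR Im_Csum (Rsum_ext (g := fun v => Im (phi (inl v)) * rr (inl v) y)) in H;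
  last by move=> v; rewrite Im_multR.
apply: is_series_ext H => m; rewrite Im_Csum; apply: Rsum_ext => b; exact: Im_multR.
Qed.


Lemma is_series_eqv (a b : nat -> R) l l' : is_series a l -> l = l' -> (forall n, a n = b n) -> is_series b l'.
Proof. move=> H <- E; exact: is_series_ext H. Qed.

Lemma inner_proj_Re (phi : X -> C) n : inner_eq M (fun w => phi (inr w)) n -> rinner M (fun x => Re (phi x)) n.
Proof. rewrite /inner_eq /rinner => /Re_series H.
apply: (is_series_eqv H); first by rewrite Re_Rmult.
move=> j /=; rewrite Re_Csum; apply: Rsum_ext => i; rewrite /iterm.
by case: (n.2 i); rewrite Re_plus !Re_Rmult.
Qed.

Lemma inner_proj_Im (phi : X -> C) n : inner_eq M (fun w => phi (inr w)) n -> rinner M (fun x => Im (phi x)) n.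
Proof. rewrite /inner_eq /rinner => /Im_series H.
apply: (is_series_eqv H); first by rewrite Im_Rmult.
move=> j /=; rewrite Im_Csum; apply: Rsum_ext => i; rewrite /iterm.
by case: (n.2 i); rewrite Im_plus !Im_Rmult.
Qed.

Lemma rinner_lin (mu nu : X -> R) a b n : rinner M mu n -> rinner M nu n ->
  rinner M (fun x => a * mu x + b * nu x) n.
Proof. rewrite /rinner => H1 H2.
apply: (is_series_eqv (is_series_plus _ _ _ _ (is_series_scal a _ _ H1) (is_series_scal b _ _ H2))).
  rewrite /plus /scal /= /mult /=; ring.
move=> j; rewrite /plus /scal /= /mult /= -!Rsum_scal -Rsum_plus; apply: Rsum_ext => i.
rewrite /iterm; case: (n.2 i); ring.
Qed.

Lemma rinner_zero n : rinner M (fun _ => 0) n.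
Proof. rewrite /rinner. apply: (is_series_eqv (is_series_zero (a := fun _ => 0) (fun _ => erefl))) => [|j].
  by rewrite Rmult_0_r.
 rewrite (Rsum_ext (g := fun _ => 0)) ?Rsum0 // => i; rewrite /iterm; case: (n.2 i); ring.
Qed.

Lemma rinner_ext (mu nu : X -> R) n : (forall w, mu (inr w) = nu (inr w)) -> rinner M mu n -> rinner M nu n.
Proof. move=> E. have E' : (fun w => mu (inr w)) = (fun w => nu (inr w)) by apply: functional_extensionality.
by rewrite /rinner E' E. Qed.

Lemma rinner_sum (I : finType) (F : I -> X -> R) n : (forall i, rinner M (F i) n) ->
  rinner M (fun x => Rsum (fun i => F i x)) n.
Proof. move=> H. rewrite /Rsum. elim: (index_enum I) => [|i r IH].
  apply: (rinner_ext (mu := fun _ => 0)); last exact: rinner_zero.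
  move=> w; by rewrite big_nil.
apply: (rinner_ext (mu := fun x => 1 * F i x + 1 * \big[Rplus/0]_(j <- r) F j x)); last exact: rinner_lin.
move=> w; rewrite big_cons; ring.
Qed.

Lemma l1_W (mu : X -> R) : ex_series (fun m => Rsum (fun b => Rabs (mu (inr (m, b))))) -> l1 mu.
Proof. move=> [s Hs]. exists (s + Rsum (fun v => Rabs (mu (inl v)))).
rewrite /is_Xsum. by have -> : s + Rsum (fun v => Rabs (mu (inl v))) - Rsum (fun v => Rabs (mu (inl v))) = s by ring.
Qed.

Lemma Xsum_Re (phi : X -> C) (l : C) : is_series (fun m => Csum (fun b => phi (inr (m, b)))) (Cminus l (Csum (fun v => phi (inl v)))) ->
  is_Xsum (fun x => Re (phi x)) (Re l) /\ is_Xsum (fun x => Im (phi x)) (Im l).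
Proof. move=> H; split; rewrite /is_Xsum.
- have := Re_series H; rewrite Re_minus Re_Csum => H'.
  apply: is_series_ext H' => m; by rewrite Re_Csum.
- have := Im_series H; rewrite Im_minus Im_Csum => H'.
  apply: is_series_ext H' => m; by rewrite Im_Csum.
Qed.

Variables (pV : V -> R) (pW : W c -> R).
Hypothesis hp : equilibrium M pV pW.
Definition pX (x : X) : R := match x with inl v => pV v | inr n => pW n end.

Lemma p_bal y : bal rr out pX y.
Proof. case: hp => _ [_ [hV [hW _]]].
case: y => [v|n].
- have H := @cbal_Re (fun x => RtoC (pX x)) (inl v) (hV v). exact: H.
- have H := @cbal_Re (fun x => RtoC (pX x)) (inr n) (hW n). exact: H.
Qed.

Lemma p_sum : is_Xsum pX 1.
Proof. case: hp => _ [_ [_ [_ hn]]].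
exact: (proj1 (Xsum_Re (phi := fun x => RtoC (pX x)) hn)). Qed.

Lemma p_l1 : l1 pX.
Proof. case: hp => h0 [h1 _]. exists 1. apply: Xsum_ext p_sum => x.
rewrite Rabs_pos_eq //; case: x => [v|n] /=; auto. Qed.

Lemma eq_p (muR muI : X -> R) : l1 muR -> l1 muI ->
  (forall y, bal rr out muR y) -> (forall y, bal rr out muI y) ->
  is_Xsum muR 1 -> is_Xsum muI 0 -> (forall x, muR x = pX x) /\ (forall x, muI x = 0).
Proof.
move=> l1R l1I bR bI sR sI; split.
- move=> x.
  have := uniqueness r0' rout' outB' hirr (mu := fun x => muR x + -1 * pX x)
    (l1_plus l1R (l1_scal (-1) p_l1)) (fun y => bal_plus (bR y) (bal_scal (a:=-1) (p_bal (y:=y)))).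
  move=> /(_ (Xsum_eq (Xsum_plus sR (Xsum_scal (a:=-1) p_sum)) _ (fun _ => erefl))).
  move=> H; have := H ltac:(ring) x; lra.
- move=> x; exact: (uniqueness r0' rout' outB' hirr l1I bI sI x).
Qed.


Lemma C_eq (z1 z2 : C) : Re z1 = Re z2 -> Im z1 = Im z2 -> z1 = z2.
Proof. case: z1 => a b; case: z2 => a' b' /= -> ->; done. Qed.

Definition xval (f : X -> R) : R :=
  Rsum (fun v => f (inl v)) + Series (fun m => Rsum (fun b => f (inr (m, b)))).

Lemma xval_spec (f : X -> R) s : is_Xsum f s -> xval f = s.
Proof. rewrite /is_Xsum /xval => H; rewrite (is_series_unique _ _ H); ring. Qed.

Lemma l1_Xsum (mu : X -> R) : l1 mu -> exists s, is_Xsum mu s.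
Proof. move=> [t Ht]; have [s [Hs _]] := Xsum_abs Ht; by exists s. Qed.

Lemma inflow_ex (mu : X -> R) y : l1 mu -> exists s, is_Xsum (fun x => mu x * rr x y) s.
Proof. move=> H; have [j [S [Hj _]]] := fubini_signed r0' rout' outB' H; by exists (j y). Qed.

Definition rres (mu : X -> R) (y : X) : R := mu y * out y - xval (fun x => mu x * rr x y).

Lemma rres_bal (mu : X -> R) y : l1 mu -> (bal rr out mu y <-> rres mu y = 0).
Proof. move=> H; have [s Hs] := inflow_ex y H.
rewrite /rres (xval_spec Hs); split => [Hb|E].
- rewrite (Xsum_unique Hs Hb); ring.
- rewrite /bal; apply: (Xsum_eq Hs) => //; lra.
Qed.

Lemma xval_lin (mu nu : X -> R) a b : l1 mu -> l1 nu ->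
  xval (fun x => a * mu x + b * nu x) = a * xval mu + b * xval nu.
Proof. move=> H1 H2; have [s1 Hs1] := l1_Xsum H1; have [s2 Hs2] := l1_Xsum H2.
rewrite (xval_spec Hs1) (xval_spec Hs2). apply: xval_spec.
exact: Xsum_plus (Xsum_scal Hs1) (Xsum_scal Hs2). Qed.

Lemma rres_lin (mu nu : X -> R) a b y : l1 mu -> l1 nu ->
  rres (fun x => a * mu x + b * nu x) y = a * rres mu y + b * rres nu y.
Proof. move=> H1 H2; have [s1 Hs1] := inflow_ex y H1; have [s2 Hs2] := inflow_ex y H2.
rewrite /rres (xval_spec Hs1) (xval_spec Hs2).
rewrite (xval_spec (s := a * s1 + b * s2)); first ring.
apply: (Xsum_eq (Xsum_plus (Xsum_scal (a:=a) Hs1) (Xsum_scal (a:=b) Hs2))) => // x; ring. Qed.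

Lemma Xsum_zero0 : is_Xsum (fun _ : X => 0) 0.
Proof. rewrite /is_Xsum. have -> : 0 - Rsum (fun v : V => 0) = 0 by rewrite Rsum0; ring.
apply: is_series_zero => m; exact: Rsum0. Qed.

Lemma xval_zero : xval (fun _ => 0) = 0.
Proof. exact: xval_spec Xsum_zero0. Qed.

Lemma rres_zero y : rres (fun _ => 0) y = 0.
Proof. rewrite /rres. rewrite (xval_spec (s := 0)); first ring.
apply: Xsum_ext Xsum_zero0 => x; ring. Qed.

Lemma l1_zero : l1 (fun _ : X => 0).
Proof. exists 0; apply: Xsum_ext Xsum_zero0 => x; by rewrite Rabs_R0. Qed.

Lemma l1_ext (mu nu : X -> R) : (forall x, mu x = nu x) -> l1 mu -> l1 nu.
Proof. move=> E [t Ht]; exists t; apply: Xsum_ext Ht => x; by rewrite E. Qed.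

Definition Evec (y : X) (mass : bool) (phi : X -> C) : C :=
  if mass then (xval (fun x => Re (phi x)), xval (fun x => Im (phi x)))
  else (rres (fun x => Re (phi x)) y, rres (fun x => Im (phi x)) y).

Definition cl1 (phi : X -> C) := l1 (fun x => Re (phi x)) /\ l1 (fun x => Im (phi x)).

Lemma cl1_comb (a : C) (phi psi : X -> C) : cl1 phi -> cl1 psi -> cl1 (fun x => Cplus (Cmult a (phi x)) (psi x)).
Proof. move=> [h1 h2] [h3 h4]; split.
- apply: (l1_ext (mu := fun x => 1 * (Re a * Re (phi x) + (- Im a) * Im (phi x)) + 1 * Re (psi x))).
    move=> x /=; rewrite /Re /Im /=; ring.
  apply: l1_plus; apply: l1_scal => //; apply: l1_plus; exact: l1_scal.
- apply: (l1_ext (mu := fun x => 1 * (Re a * Im (phi x) + Im a * Re (phi x)) + 1 * Im (psi x))).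
    move=> x /=; rewrite /Re /Im /=; ring.
  apply: l1_plus; apply: l1_scal => //; apply: l1_plus; exact: l1_scal.
Qed.

Lemma Evec_comb (a : C) (phi psi : X -> C) y mass : cl1 phi -> cl1 psi ->
  Evec y mass (fun x => Cplus (Cmult a (phi x)) (psi x)) = Cplus (Cmult a (Evec y mass phi)) (Evec y mass psi).
Proof. move=> [h1 h2] [h3 h4].
have eR : (fun x => Re (Cplus (Cmult a (phi x)) (psi x))) =
   (fun x => 1 * (Re a * Re (phi x) + (- Im a) * Im (phi x)) + 1 * Re (psi x)).
  apply: functional_extensionality => x; rewrite /Re /Im /=; ring.
have eI : (fun x => Im (Cplus (Cmult a (phi x)) (psi x))) =
   (fun x => 1 * (Re a * Im (phi x) + Im a * Re (phi x)) + 1 * Im (psi x)).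
  apply: functional_extensionality => x; rewrite /Re /Im /=; ring.
have l1a : l1 (fun x => Re a * Re (phi x) + (- Im a) * Im (phi x)) by apply: l1_plus; exact: l1_scal.
have l1b : l1 (fun x => Re a * Im (phi x) + Im a * Re (phi x)) by apply: l1_plus; exact: l1_scal.
rewrite /Evec eR eI; case: mass; apply: C_eq; rewrite /=.
- rewrite xval_lin // xval_lin //; rewrite /Re /Im /=; ring.
- rewrite xval_lin // xval_lin //; rewrite /Re /Im /=; ring.
- rewrite rres_lin // rres_lin //; rewrite /Re /Im /=; ring.
- rewrite rres_lin // rres_lin //; rewrite /Re /Im /=; ring.
Qed.

Lemma Evec_zero y mass : Evec y mass (fun _ => RtoC 0) = RtoC 0.
Proof. rewrite /Evec; case: mass; apply: C_eq => /=.
- exact: xval_zero.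
- exact: xval_zero.
- exact: rres_zero.
- exact: rres_zero.
Qed.

Lemma Evec_sum (I : Type) (r : seq I) (xs : I -> C) (phi : I -> X -> C) y mass :
  (forall u, cl1 (phi u)) ->
  cl1 (fun z => \big[Cplus/RtoC 0]_(u <- r) Cmult (xs u) (phi u z)) /\
  Evec y mass (fun z => \big[Cplus/RtoC 0]_(u <- r) Cmult (xs u) (phi u z)) =
    \big[Cplus/RtoC 0]_(u <- r) Cmult (xs u) (Evec y mass (phi u)).
Proof. move=> H; elim: r => [|u r [IH1 IH2]].
  rewrite big_nil.
  have E : (fun z => \big[Cplus/RtoC 0]_(u <- [::]) Cmult (xs u) (phi u z)) = (fun _ => RtoC 0).
    apply: functional_extensionality => z; by rewrite big_nil.
  rewrite E Evec_zero; split => //; split; apply: (l1_ext (mu := fun _ => 0)) => //; try exact: l1_zero.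
have E : (fun z => \big[Cplus/RtoC 0]_(u0 <- u :: r) Cmult (xs u0) (phi u0 z)) =
   (fun z => Cplus (Cmult (xs u) (phi u z)) (\big[Cplus/RtoC 0]_(u0 <- r) Cmult (xs u0) (phi u0 z))).
  apply: functional_extensionality => z; by rewrite big_cons.
rewrite E big_cons; split; first exact: cl1_comb.
by rewrite Evec_comb // IH2.
Qed.

End Main.

From HB Require Import structures.

Set Implicit Arguments.
Unset Strict Implicit.
Open Scope R_scope.


Section Main2.
Variables (c K : nat) (V : finType) (M : model c K V).
Hypothesis hM : model_ok M.
Hypothesis hirr : irreducible M.
Hypothesis hK : (1 <= K)%nat.
Variables (pV : V -> R) (pW : W c -> R).
Hypothesis hp : equilibrium M pV pW.
Variables (N : nat) (ps : 'I_N -> W c -> C).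
Hypothesis hps_ac : forall j, abs_conv (ps j).
Hypothesis hps_sol : forall j, inner_solution M (ps j).
Hypothesis hps_ind : lin_indep ps.
Local Notation X := (V + W c)%type.
Local Notation rr := (rate M).
Local Notation out := (outX M).

Definition phi (al : 'I_N -> C) (qV : V -> C) : X -> C :=
  fun x => match x with inl v => qV v | inr w => lin_comb al ps w end.
Definition psX (j : 'I_N) : X -> C := fun x => match x with inl _ => RtoC 0 | inr w => ps j w end.

Lemma phi_l1_gen (g : C -> R) al qV : (forall z, Rabs (g z) <= Cmod z) -> l1 (fun x => g (phi al qV x)).
Proof.
move=> Hg; apply: l1_W.
pose U m := Rsum (fun j => Cmod (al j) * Rsum (fun b => Cmod (ps j (m, b)))).
have exU : ex_series U.
  exists (Rsum (fun j => Cmod (al j) * Series (fun m => Rsum (fun b => Cmod (ps j (m, b)))))).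
  apply: Rsum_series => j. exact: (is_series_scal (Cmod (al j)) _ _ (Series_correct _ (hps_ac j))).
apply: (ex_series_le _ U) => // m.
rewrite /norm /= /abs /= Rabs_pos_eq; last by apply: Rsum_ge0 => b; exact: Rabs_pos.
have E : U m = Rsum (fun b => Rsum (fun j => Cmod (al j) * Cmod (ps j (m, b)))).
  rewrite /U /Rsum exchange_big /=; apply: eq_bigr => j _; by rewrite big_distrr.
rewrite E; apply: Rsum_le => b /=.
apply: Rle_trans (Hg _) _. rewrite /lin_comb. apply: Rle_trans (Cmod_Csum _) _.
apply: Rsum_le => j; rewrite Cmod_mult; lra.
Qed.

Lemma phi_cl1 al qV : cl1 (phi al qV).
Proof. split; apply: phi_l1_gen => z; [exact: re_le_Cmod | exact: Im_le_Cmod]. Qed.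

Lemma phi_high al qV n : (K <= n.1)%nat ->
  bal rr out (fun x => Re (phi al qV x)) (inr n) /\ bal rr out (fun x => Im (phi al qV x)) (inr n).
Proof.
move=> HK; split; apply: high_bal => //.
- apply: (rinner_ext (mu := fun x => Rsum (fun j => Re (al j) * Re (psX j x) + (- Im (al j)) * Im (psX j x)))).
    move=> w /=; rewrite /lin_comb Re_Csum; apply: Rsum_ext => j; rewrite /Re /Im /=; ring.
  apply: rinner_sum => j; apply: rinner_lin.
    exact: (inner_proj_Re (phi := psX j) (hps_sol HK)).
  exact: (inner_proj_Im (phi := psX j) (hps_sol HK)).
- apply: (rinner_ext (mu := fun x => Rsum (fun j => Re (al j) * Im (psX j x) + Im (al j) * Re (psX j x)))).
    move=> w /=; rewrite /lin_comb Im_Csum; apply: Rsum_ext => j; rewrite /Re /Im /=; ring.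
  apply: rinner_sum => j; apply: rinner_lin.
    exact: (inner_proj_Im (phi := psX j) (hps_sol HK)).
  exact: (inner_proj_Re (phi := psX j) (hps_sol HK)).
Qed.


Lemma l1_psX j0 : cl1 (psX j0).
Proof.
have H : forall g : C -> R, (forall z, Rabs (g z) <= Cmod z) -> l1 (fun x => g (psX j0 x)).
  move=> g Hg; apply: l1_W. apply: (ex_series_le _ (fun m => Rsum (fun b => Cmod (ps j0 (m, b))))) => [m|]; last exact: hps_ac.
  rewrite /norm /= /abs /= Rabs_pos_eq; last by apply: Rsum_ge0 => b; exact: Rabs_pos.
  apply: Rsum_le => b; exact: Hg.
split; apply: H => z; [exact: re_le_Cmod | exact: Im_le_Cmod].
Qed.

Local Notation J := (('I_K * {ffun 'I_c -> bool}) + V)%type.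
Local Notation I := ('I_N + V)%type.

Definition st (j : J) : X := match j with inl kb => inr (nat_of_ord kb.1, kb.2) | inr v => inl v end.
Definition s0 : J := inl (Ordinal hK, [ffun => false]).

Definition basis (u : I) : X -> C :=
  match u with
  | inl j => psX j
  | inr v => fun x => match x with inl v' => if v' == v then RtoC 1 else RtoC 0 | inr _ => RtoC 0 end
  end.

Lemma basis_cl1 u : cl1 (basis u).
Proof. case: u => [j|v] /=; first exact: l1_psX.
have H : forall g : C -> R, g (RtoC 0) = 0 ->
    l1 (fun x : X => g (match x with inl v' => if v' == v then RtoC 1 else RtoC 0 | inr _ => RtoC 0 end)).
  move=> g g0; apply: l1_W. exists 0; apply: is_series_zero => m.
  rewrite (Rsum_ext (g := fun _ => 0)) ?Rsum0 // => b; by rewrite g0 Rabs_R0.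
split; apply: H; done.
Qed.

Lemma Phi_eq (x : I -> C) z :
  \big[Cplus/RtoC 0]_(u : I) Cmult (x u) (basis u z) = phi (fun j => x (inl j)) (fun v => x (inr v)) z.
Proof.
rewrite big_sumType /=. case: z => [v|w] /=.
- rewrite big1; last by move=> j _; rewrite Cmult_0_r.
  rewrite Cplus_0_l (bigD1 v) //= eqxx Cmult_1_r big1 ?Cplus_0_r //.
  move=> v' ne; by rewrite eq_sym (negbTE ne) Cmult_0_r.
- rewrite [X in Cplus _ X]big1; last by move=> v _; rewrite Cmult_0_r.
  by rewrite Cplus_0_r.
Qed.


Lemma st_s0 (j : J) : j != s0 -> st j <> st s0.
Proof. case: j => [[k b]|v] ne //= E. case: E => Ek Eb.
move: ne; rewrite /s0; have -> : k = Ordinal hK by apply: val_inj. by rewrite Eb eqxx. Qed.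

Lemma from_E al qV (e : J -> C) :
  (forall j, Evec M (st j) (j == s0) (phi al qV) = e j) -> (forall j, j != s0 -> e j = RtoC 0) ->
  (forall y, bal rr out (fun x => Re (phi al qV x)) y) /\ (forall y, bal rr out (fun x => Im (phi al qV x)) y) /\
  is_Xsum (fun x => Re (phi al qV x)) (Re (e s0)) /\ is_Xsum (fun x => Im (phi al qV x)) (Im (e s0)).
Proof.
move=> He Hz.
have [lR lI] := phi_cl1 al qV.
have Hres : forall j, j != s0 -> rres M (fun x => Re (phi al qV x)) (st j) = 0 /\ rres M (fun x => Im (phi al qV x)) (st j) = 0.
  move=> j ne; have := He j; rewrite (negbTE ne) (Hz j ne) /Evec => E.
  by split; [have := congr1 Re E | have := congr1 Im E].
have Hall : forall y, y <> st s0 -> bal rr out (fun x => Re (phi al qV x)) y /\ bal rr out (fun x => Im (phi al qV x)) y.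
  move=> y ne; case: y ne => [v|[m b]] ne.
  - have [h1 h2] := Hres (inr v) isT. by split; apply/rres_bal.
  - case: (ltnP m K) => Hm.
    + pose j : J := inl (Ordinal Hm, b).
      have nej : j != s0 by apply/eqP => Ej; apply: ne; rewrite -Ej.
      have [h1 h2] := Hres j nej. by split; apply/rres_bal.
    + exact: phi_high.
have bR : forall y, bal rr out (fun x => Re (phi al qV x)) y.
  move=> y; case: (Classical_Prop.classic (y = st s0)) => [->|ne]; last exact: (Hall y ne).1.
  apply: (conservation (r0' hM) (rout' hM) (outB' hM) lR) => y' ne; exact: (Hall y' ne).1.
have bI : forall y, bal rr out (fun x => Im (phi al qV x)) y.
  move=> y; case: (Classical_Prop.classic (y = st s0)) => [->|ne]; last exact: (Hall y ne).2.
  apply: (conservation (r0' hM) (rout' hM) (outB' hM) lI) => y' ne; exact: (Hall y' ne).2.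
have Hm := He s0; rewrite eqxx /Evec in Hm.
have [sR HsR] := l1_Xsum lR; have [sI HsI] := l1_Xsum lI.
split => //; split => //; split.
- by rewrite -Hm /= (xval_spec HsR).
- by rewrite -Hm /= (xval_spec HsI).
Qed.


Lemma Evec_phi (x : I -> C) y mass :
  \big[Cplus/RtoC 0]_(u : I) Cmult (x u) (Evec M y mass (basis u)) =
  Evec M y mass (phi (fun j => x (inl j)) (fun v => x (inr v))).
Proof.
have [_ E] := Evec_sum hM (index_enum I) x y mass basis_cl1.
rewrite -E; congr (Evec M y mass _); apply: functional_extensionality => z; exact: Phi_eq.
Qed.

Lemma main_exists : N = (2 ^ c * K)%nat -> exists al, forall n, RtoC (pW n) = lin_comb al ps n.
Proof.
move=> hN.
pose A (u : I) (j : J) := Evec M (st j) (j == s0) (basis u).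
have card : #|{: I}| = #|{: J}|.
  by rewrite !card_sum card_ord card_prod card_ord card_ffun card_bool card_ord hN mulnC.
have inj : forall x : I -> C, (forall j, \big[Cplus/RtoC 0]_u Cmult (x u) (A u j) = RtoC 0) -> forall u, x u = RtoC 0.
  move=> x H.
  have HE : forall j, Evec M (st j) (j == s0) (phi (fun j => x (inl j)) (fun v => x (inr v))) = RtoC 0.
    by move=> j; rewrite -Evec_phi; exact: H.
  have [bR [bI [sR sI]]] := from_E HE (fun _ _ => erefl).
  have [lR lI] := phi_cl1 (fun j => x (inl j)) (fun v => x (inr v)).
  have zR := uniqueness (r0' hM) (rout' hM) (outB' hM) hirr lR bR sR.
  have zI := uniqueness (r0' hM) (rout' hM) (outB' hM) hirr lI bI sI.
  have z0 : forall z, phi (fun j => x (inl j)) (fun v => x (inr v)) z = RtoC 0.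
    by move=> z; apply: C_eq; [exact: zR | exact: zI].
  have al0 := hps_ind (alpha := fun j => x (inl j)) (fun n => z0 (inr n)).
  case=> [j|v]; [exact: al0 | exact: z0 (inl v)].
pose b (j : J) := if j == s0 then RtoC 1 else RtoC 0.
have [x Hx] := @square_inj_surj' _ _ A card inj b.
exists (fun j => x (inl j)) => n.
have HE : forall j, Evec M (st j) (j == s0) (phi (fun j => x (inl j)) (fun v => x (inr v))) = b j.
  by move=> j; rewrite -Evec_phi; exact: Hx.
have Hz : forall j, j != s0 -> b j = RtoC 0 by move=> j ne; rewrite /b (negbTE ne).
have [bR [bI [sR sI]]] := from_E HE Hz.
rewrite /b eqxx in sR sI.
have [lR lI] := phi_cl1 (fun j => x (inl j)) (fun v => x (inr v)).
have [eR eI] := eq_p hM hirr hp lR lI bR bI sR sI.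
apply: C_eq.
- by have := eR (inr n) => /= ->.
- by have := eI (inr n) => /= ->.
Qed.

Lemma main_unique (al : 'I_N -> C) (qV : V -> C) :
  (forall y : V, balanceV M qV (lin_comb al ps) y) ->
  (forall n : W c, (n.1 < K)%nat -> balanceW M qV (lin_comb al ps) n) ->
  normalized qV (lin_comb al ps) ->
  forall n, lin_comb al ps n = RtoC (pW n).
Proof.
move=> HV HW Hn n.
have [lR lI] := phi_cl1 al qV.
have cb : forall y, (forall n, y = inr n -> (n.1 < K)%nat) -> cbalX M (phi al qV) y.
  case=> [v|m] H; [exact: HV | exact: (HW m (H m erefl))].
have bb : forall y, bal rr out (fun x => Re (phi al qV x)) y /\ bal rr out (fun x => Im (phi al qV x)) y.
  case=> [v|m].
  - by split; [apply: cbal_Re | apply: cbal_Im]; apply: cb.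
  - case: (ltnP m.1 K) => Hm; last exact: phi_high.
    by split; [apply: cbal_Re | apply: cbal_Im]; apply: cb => n' [<-].
have [sR sI] := Xsum_Re (phi := phi al qV) Hn.
have [eR eI] := eq_p hM hirr hp lR lI (fun y => (bb y).1) (fun y => (bb y).2) sR sI.
apply: C_eq.
- by have := eR (inr n) => /= ->.
- by have := eI (inr n) => /= ->.
Qed.

End Main2.

Unset Implicit Arguments.

Lemma lc_inj (c N : nat) (ps : 'I_N -> W c -> C) (al al' : 'I_N -> C) :
  lin_indep ps -> (forall n, lin_comb al ps n = lin_comb al' ps n) -> al' = al.
Proof.
move=> hind E.
have Z : forall n, lin_comb (fun j => Cminus (al' j) (al j)) ps n = RtoC 0.
  move=> n; have := E n; rewrite /lin_comb => En.
  have ER := congr1 Re En; have EI := congr1 Im En.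
  rewrite !Re_Csum in ER; rewrite !Im_Csum in EI.
  apply: C_eq.
  - rewrite Re_Csum /=.
    rewrite (Rsum_ext (g := fun j => Re (Cmult (al' j) (ps j n)) + - Re (Cmult (al j) (ps j n)))); last first.
      move=> j; rewrite /Re /Im /=; ring.
    rewrite Rsum_plus Rsum_opp ER; ring.
  - rewrite Im_Csum /=.
    rewrite (Rsum_ext (g := fun j => Im (Cmult (al' j) (ps j n)) + - Im (Cmult (al j) (ps j n)))); last first.
      move=> j; rewrite /Re /Im /=; ring.
    rewrite Rsum_plus Rsum_opp EI; ring.
have H := hind _ Z.
apply: functional_extensionality => j; have := H j => Hj.
have h1 := congr1 Re Hj; have h2 := congr1 Im Hj.
apply: C_eq; rewrite /Re /Im /= in h1 h2 *; lra.
Qed.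

Theorem lemma2 (c K : nat) (V : finType) (M : model c K V)
  (hc : (1 <= c)%nat) (hK : (1 <= K)%nat)
  (hM : model_ok M) (hirr : irreducible M)
  (pV : V -> R) (pW : W c -> R) (hp : equilibrium M pV pW)
  (ps : 'I_(2 ^ c * K) -> W c -> C)
  (hps_ac : forall j, abs_conv (ps j))
  (hps_sol : forall j, inner_solution M (ps j))
  (hps_ind : lin_indep ps) :
  exists alpha : 'I_(2 ^ c * K) -> C,
    (forall n : W c, RtoC (pW n) = lin_comb alpha ps n) /\
    (forall alpha' : 'I_(2 ^ c * K) -> C,
       (forall n : W c, RtoC (pW n) = lin_comb alpha' ps n) -> alpha' = alpha) /\
    (* alpha is the unique solution of the equilibrium equations for the states
       in V and the states n in W with n_0 < K, together with normalization *)
    (forall (alpha' : 'I_(2 ^ c * K) -> C) (qV : V -> C),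
       (forall y : V, balanceV M qV (lin_comb alpha' ps) y) ->
       (forall n : W c, (n.1 < K)%nat -> balanceW M qV (lin_comb alpha' ps) n) ->
       normalized qV (lin_comb alpha' ps) ->
       alpha' = alpha).
Proof.
have [al Hal] := main_exists hM hirr hK hp hps_ac hps_sol hps_ind erefl.
exists al; split; first exact: Hal.
split.
- move=> al' H'. apply: (@lc_inj _ _ ps al al' hps_ind) => n; by rewrite -Hal -H'.
- move=> al' qV HV HW Hn. apply: (@lc_inj _ _ ps al al' hps_ind) => n.
  by rewrite -Hal (main_unique hM hirr hp hps_ac hps_sol HV HW Hn).
Qed.
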